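(* Let $R$, $G$, $*$, $\sigma$ and $\mathcal{S}$ be as in the context, and suppose $\mathcal{S}$ is anticommutative. Let $x,y\in G\setminus G_*$. - (i) If $(x,y)=1$, then $c_x=c_y$ and $2(1+\sigma(xy))=0=2(\sigma(x)+\sigma(y))$. - (ii) If $(x,y)\neq 1$, then one of the following holds: - (a) $(x,y)=c_x=c_y=c_{xy}$ and $1+\sigma(x)+\sigma(y)+\sigma(xy)=0$; - (b) $(x,y)=c_x\neq c_y=c_{xy}$ and $\sigma(x)=-1$; - (c) $(x,y)=c_y\neq c_x=c_{xy}$ and $\sigma(y)=-1$; - (d) $(x,y)=c_{xy}\neq c_x=c_y$, $\sigma(xy)=-1$ and $\sigma(x)=-\sigma(y)$.
   Context: Throughout, $R$ is a commutative ring with unity with $\operatorname{char}(R)\neq 2$, and $\mathcal{U}(R)$ is its unit group. $G$ is a group with an involution $*$, i.e. a map $x\mapsto x^*$ with $(xy)^*=y^*x^*$ and $(x^* )^*=x$. The map $\sigma:G\to\mathcal{U}(R)$ is a nontrivial group homomorphism with kernel $N=\ker\sigma$, and it is compatible with $*$: $xx^*\in N$ for all $x\in G$. The group ring $RG$ carries the involution $\left(\sum_{x\in G}\alpha_x x\right)^{\sigma*}=\sum_{x\in G}\sigma(x)\alpha_x x^*$. Write $G_*=\{x\in G: x^*=x\}$ and $N_*=G_*\cap N$. Let $\mathcal{S}$ be the $R$-submodule of $RG$ spanned by the union of the following three sets: - $2\mathcal{S}_1=\{2x: x\in N_*\}$; - $\mathcal{S}_2=\{\alpha x: x\in G_*\setminus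 N,\ \alpha\in R,\ \alpha(1-\sigma(x))=0\}$; - $\mathcal{S}_3=\{x+\sigma(x)x^*: x\in G\setminus G_*\}$. $\mathcal{S}$ is called anticommutative if $ab+ba=0$ for all $a,b\in\mathcal{S}$. The commutator is $(x,y)=x^{-1}y^{-1}xy$, and for $a\in G$ we put $c_a=a^*a^{-1}$. *)

(* Defs.v *)
From HB Require Import structures.
From mathcomp Require Import all_boot all_order all_algebra.
From Stdlib Require Import ClassicalEpsilon.
Set Implicit Arguments. Unset Strict Implicit. Unset Printing Implicit Defensive.
Import GRing.Theory.
Local Open Scope ring_scope.

Record invGroup := InvGroup {
  gcar :> Type;
  gmul : gcar -> gcar -> gcar;
  gone : gcar;
  ginv : gcar -> gcar;
  gstar : gcar -> gcar;
  gmulA : forall x y z, gmul x (gmul y z) = gmul (gmul x y) z;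
  gmul1 : forall x, gmul gone x = x;
  gmulV : forall x, gmul (ginv x) x = gone;
  gstarM : forall x y, gstar (gmul x y) = gmul (gstar y) (gstar x);
  gstarK : forall x, gstar (gstar x) = x
}.

Section GroupRing.
Variable G : invGroup.
Variable R : comUnitRingType.

Definition geqb (x y : G) : bool :=
  if excluded_middle_informative (x = y) then true else false.

Definition gcomm (x y : G) : G :=
  gmul (gmul (gmul (ginv x) (ginv y)) x) y.

Definition cst (a : G) : G := gmul (gstar a) (ginv a).

(* Elements of the group ring RG are represented by finite formal sums
   sum_i alpha_i g_i, given as lists of pairs (alpha_i, g_i). *)
Definition RGrep := seq (R * G).

Definition coef (a : RGrep) (g : G) : R :=
  \sum_(p <- a) (if geqb p.2 g then p.1 else 0).

Definition rg_eq (a b : RGrep) : Prop := forall g, coef a g = coef b g.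

Definition rg_add (a b : RGrep) : RGrep := a ++ b.
Definition rg_scale (c : R) (a : RGrep) : RGrep := [seq (c * p.1, p.2) | p <- a].
Definition rg_mul (a b : RGrep) : RGrep :=
  [seq (p.1 * q.1, gmul p.2 q.2) | p <- a, q <- b].
Definition rg_of (g : G) : RGrep := [:: (1, g)].

Variable sigma : G -> R.

Definition in_Gstar (x : G) : Prop := gstar x = x.
Definition in_N (x : G) : Prop := sigma x = 1.

(* the generating set S_1' (= 2 S_1) U S_2 U S_3 of the R-module S *)
Definition S_gen (a : RGrep) : Prop :=
  (exists x : G, [/\ in_N x, in_Gstar x & a = [:: (2%:R, x)]])
  \/ (exists (x : G) (alpha : R),
        [/\ in_Gstar x, ~ in_N x, alpha * (1 - sigma x) = 0 & a = [:: (alpha, x)]])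
  \/ (exists x : G, ~ in_Gstar x /\ a = [:: (1, x); (sigma x, gstar x)]).

Definition in_S (a : RGrep) : Prop :=
  exists cs : seq (R * RGrep),
    (forall i, (i < size cs)%N -> S_gen (nth (0, [::]) cs i).2) /\
    rg_eq a (flatten [seq rg_scale c.1 c.2 | c <- cs]).

Definition S_anticomm : Prop :=
  forall a b, in_S a -> in_S b -> rg_eq (rg_add (rg_mul a b) (rg_mul b a)) [::].

End GroupRing.

(* Main.v *)
Require Import Defs.
From HB Require Import structures.
From mathcomp Require Import all_boot all_order all_algebra.
From mathcomp Require Import ring.
From Stdlib Require Import ClassicalEpsilon Classical.
Set Implicit Arguments. Unset Strict Implicit.
Import GRing.Theory.
Local Open Scope ring_scope.
Local Notation "a ** b" := (gmul a b) (at level 40, left associativity).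


Lemma gmulgV (G : invGroup) (x : G) : x ** ginv x = gone G.
Proof.
rewrite -[x ** ginv x]gmul1 -{1}(gmulV (ginv x)) -gmulA (gmulA (ginv x) x) gmulV.
by rewrite gmul1 gmulV.
Qed.
Lemma gmulg1 (G : invGroup) (x : G) : x ** gone G = x.
Proof. by rewrite -(gmulV x) gmulA gmulgV gmul1. Qed.
Lemma gmulKg (G : invGroup) (x y : G) : ginv x ** (x ** y) = y.
Proof. by rewrite gmulA gmulV gmul1. Qed.
Lemma gmulVKg (G : invGroup) (x y : G) : x ** (ginv x ** y) = y.
Proof. by rewrite gmulA gmulgV gmul1. Qed.
Lemma gmulgK (G : invGroup) (x y : G) : y ** x ** ginv x = y.
Proof. by rewrite -gmulA gmulgV gmulg1. Qed.
Lemma gmulgVK (G : invGroup) (x y : G) : y ** ginv x ** x = y.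
Proof. by rewrite -gmulA gmulV gmulg1. Qed.
Lemma gmulgI (G : invGroup) (z x y : G) : z ** x = z ** y -> x = y.
Proof. by move=> h; rewrite -(gmulKg z x) h gmulKg. Qed.
Lemma gmulIg (G : invGroup) (z x y : G) : x ** z = y ** z -> x = y.
Proof. by move=> h; rewrite -(gmulgK z x) h gmulgK. Qed.
Lemma ginv_uniq (G : invGroup) (x y : G) : x ** y = gone G -> y = ginv x.
Proof. by move=> h; rewrite -(gmulKg x y) h gmulg1. Qed.
Lemma ginvK (G : invGroup) (x : G) : ginv (ginv x) = x.
Proof. by symmetry; apply: ginv_uniq; rewrite gmulV. Qed.
Lemma ginvM (G : invGroup) (x y : G) : ginv (x ** y) = ginv y ** ginv x.
Proof.
symmetry; apply: ginv_uniq.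
by rewrite -gmulA (gmulA y) gmulgV gmul1 gmulgV.
Qed.
Lemma star1 (G : invGroup) : gstar (gone G) = gone G.
Proof.
have h := gstarM (gone G) (gone G); rewrite gmul1 in h.
apply: (@gmulgI _ (gstar (gone G))); by rewrite -h gmulg1.
Qed.
Lemma starV (G : invGroup) (x : G) : gstar (ginv x) = ginv (gstar x).
Proof. apply: ginv_uniq; by rewrite -gstarM gmulV star1. Qed.
Lemma gmul_eql (G : invGroup) (x y : G) : x ** y = x -> y = gone G.
Proof. by move=> h; apply: (@gmulgI _ x); rewrite h gmulg1. Qed.
Lemma gmul_eqr (G : invGroup) (x y : G) : x ** y = y -> x = gone G.
Proof. by move=> h; apply: (@gmulIg _ y); rewrite h gmul1. Qed.
Lemma inv2 (G : invGroup) (x y : G) : y ** y = gone G -> x ** y = gone G -> x = y.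
Proof. by move=> h1 h2; apply: (@gmulIg _ y); rewrite h1 h2. Qed.
Lemma inv2l (G : invGroup) (x y : G) : x ** x = gone G -> x ** y = gone G -> x = y.
Proof. by move=> h1 h2; apply: (@gmulgI _ x); rewrite h1 h2. Qed.

Lemma geqbP (G : invGroup) (x y : G) : reflect (x = y) (geqb x y).
Proof. rewrite /geqb; case: excluded_middle_informative => h; by constructor. Qed.

Definition ind (G : invGroup) (R : comUnitRingType) (g h : G) (r : R) : R :=
  if geqb g h then r else 0.
Lemma ind_eq (G : invGroup) (R : comUnitRingType) (g : G) (r : R) : ind g g r = r.
Proof. by rewrite /ind; case: geqbP. Qed.
Lemma ind_ne (G : invGroup) (R : comUnitRingType) (g h : G) (r : R) : g <> h -> ind g h r = 0.
Proof. by rewrite /ind; case: geqbP. Qed.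
Lemma ind_mull (G : invGroup) (R : comUnitRingType) (z g h : G) (r : R) :
  ind (z ** g) (z ** h) r = ind g h r.
Proof.
rewrite /ind; case: geqbP => [/gmulgI ->|ne]; first by case: geqbP.
by case: geqbP => // e; case: ne; rewrite e.
Qed.

Lemma coef_scale (G : invGroup) (R : comUnitRingType) (c : R) (a : RGrep G R) g :
  coef (rg_scale c a) g = c * coef a g.
Proof.
rewrite /coef /rg_scale big_map mulr_sumr; apply: eq_bigr => p _.
by case: geqb; rewrite ?mulr0.
Qed.

Lemma S_gen_in (G : invGroup) (R : comUnitRingType) (sigma : G -> R) a :
  S_gen sigma a -> in_S sigma a.
Proof.
move=> h; exists [:: (1, a)]; split; first by case.
by move=> g /=; rewrite cats0 coef_scale mul1r.
Qed.

Lemma anti_coef (G : invGroup) (R : comUnitRingType) (sigma : G -> R)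
  (hanti : S_anticomm sigma) a b :
  S_gen sigma a -> S_gen sigma b -> forall g, coef (rg_mul a b ++ rg_mul b a) g = 0.
Proof.
move=> ha hb g; have := hanti a b (S_gen_in ha) (S_gen_in hb) g.
by rewrite /coef big_nil.
Qed.

Lemma pairS (G : invGroup) (R : comUnitRingType) (sigma : G -> R)
  (hanti : S_anticomm sigma) (p q : G) (hp : gstar p <> p) (hq : gstar q <> q) g :
  ind (p ** q) g 1 + ind (p ** gstar q) g (sigma q) + ind (gstar p ** q) g (sigma p)
  + ind (gstar p ** gstar q) g (sigma p * sigma q)
  + ind (q ** p) g 1 + ind (q ** gstar p) g (sigma p) + ind (gstar q ** p) g (sigma q)
  + ind (gstar q ** gstar p) g (sigma q * sigma p) = 0.
Proof.
have gp : S_gen sigma [:: (1, p); (sigma p, gstar p)] by right; right; exists p.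
have gq : S_gen sigma [:: (1, q); (sigma q, gstar q)] by right; right; exists q.
have := anti_coef hanti gp gq g.
rewrite /rg_mul /= /coef !big_cons big_nil /= !mul1r !mulr1 /ind.
by rewrite addr0 !addrA.
Qed.

Lemma pair2 (G : invGroup) (R : comUnitRingType) (sigma : G -> R)
  (hanti : S_anticomm sigma) (p u : G) (hp : gstar p <> p)
  (hu : gstar u = u) (hN : sigma u <> 1) (h2 : 2%:R * (1 - sigma u) = 0) g :
  ind (p ** u) g 2%:R + ind (gstar p ** u) g (sigma p * 2%:R)
  + ind (u ** p) g 2%:R + ind (u ** gstar p) g (2%:R * sigma p) = 0.
Proof.
have gp : S_gen sigma [:: (1, p); (sigma p, gstar p)] by right; right; exists p.
have gu : S_gen sigma [:: (2%:R, u)] by right; left; exists u, 2%:R.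
have := anti_coef hanti gp gu g.
rewrite /rg_mul /= /coef !big_cons big_nil /= !mul1r !mulr1 /ind.
by rewrite addr0 !addrA.
Qed.

Lemma ind_mull1 (G : invGroup) (R : comUnitRingType) (z h : G) (r : R) :
  ind z (z ** h) r = ind (gone G) h r.
Proof. by rewrite -{1}(gmulg1 z) ind_mull. Qed.

Lemma tailE (G : invGroup) (a b e : G) : a ** b = e -> forall z, a ** (b ** z) = e ** z.
Proof. by move=> h z; rewrite gmulA h. Qed.

Lemma unit0 (R : comUnitRingType) (r u : R) : u \is a GRing.unit -> r * u = 0 -> r = 0.
Proof. by move=> hu h; rewrite -(mulrK hu r) h mul0r. Qed.

Lemma sq_facts (G : invGroup) (R : comUnitRingType) (sigma : G -> R)
  (hanti : S_anticomm sigma) (hunit : forall x : G, sigma x \is a GRing.unit)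
  (two0 : (2%:R : R) <> 0) (p : G) (hp : gstar p <> p) :
  gstar p ** p = p ** gstar p /\ gstar p ** gstar p = p ** p /\ (4%:R : R) = 0.
Proof.
have h := pairS hanti hp hp.
have n1 : p ** p <> p ** gstar p by move/gmulgI => e; apply: hp; rewrite -e.
have n2 : gstar p ** gstar p <> p ** gstar p by move/gmulIg.
have n3 : gstar p ** p <> p ** p by move/gmulIg.
have n4 : p ** gstar p <> p ** p by move/gmulgI.
have hpp := h (p ** gstar p).
rewrite (ind_ne _ n1) (ind_ne _ n2) ind_eq in hpp.
case: (classic (gstar p ** p = p ** gstar p)) => e; last first.
  rewrite (ind_ne _ e) in hpp.
  case: two0; apply: (@unit0 _ _ (sigma p)) => //.
  by rewrite -hpp; ring.
rewrite e ind_eq in hpp.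
have four0 : (4%:R : R) = 0.
  by apply: (@unit0 _ _ (sigma p)) => //; rewrite -hpp; ring.
split => //; split => //.
have hq := h (p ** p).
rewrite ind_eq (ind_ne _ n3) (ind_ne _ n4) in hq.
case: (classic (gstar p ** gstar p = p ** p)) => // e2.
rewrite (ind_ne _ e2) in hq.
by case: two0; rewrite -hq; ring.
Qed.

Unset Implicit Arguments.
Theorem lemma3p13 (G : invGroup) (R : comUnitRingType) (sigma : G -> R)
  (hchar : (2%:R : R) != 0)
  (hunit : forall x : G, sigma x \is a GRing.unit)
  (hmorph : forall x y : G, sigma (gmul x y) = sigma x * sigma y)
  (hnontriv : exists x : G, sigma x != 1)
  (hcompat : forall x : G, sigma (gmul x (gstar x)) = 1)
  (hanti : S_anticomm sigma)
  (x y : G) (hx : gstar x <> x) (hy : gstar y <> y) :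
  (gcomm x y = gone G ->
     cst x = cst y /\
     2%:R * (1 + sigma (gmul x y)) = 0 /\
     2%:R * (sigma x + sigma y) = 0)
  /\
  (gcomm x y <> gone G ->
     [/\ gcomm x y = cst x, cst x = cst y, cst y = cst (gmul x y)
       & 1 + sigma x + sigma y + sigma (gmul x y) = 0]
     \/ [/\ gcomm x y = cst x, cst x <> cst y, cst y = cst (gmul x y)
          & sigma x = -1]
     \/ [/\ gcomm x y = cst y, cst y <> cst x, cst x = cst (gmul x y)
          & sigma y = -1]
     \/ [/\ gcomm x y = cst (gmul x y), cst (gmul x y) <> cst x, cst x = cst y,
            sigma (gmul x y) = -1 & sigma x = - sigma y]).
Proof.
have two0 : (2%:R : R) <> 0 by apply/eqP.
rewrite hmorph.
have [hxx [hxx2 four0]] := sq_facts hanti hunit two0 hx.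
have [hyy [hyy2 _]] := sq_facts hanti hunit two0 hy.
have [c Hc] : exists c, cst x = c by eexists.
have [d Hd] : exists d, cst y = d by eexists.
rewrite Hc Hd.
have Hxc : gstar x = c ** x by rewrite -Hc /cst gmulgVK.
have Hxc' : gstar x = x ** c by rewrite -Hc /cst gmulA -hxx gmulgK.
have Hcx : x ** c = c ** x by rewrite -Hxc'.
have c2 : c ** c = gone G.
  move: hxx2; rewrite {1}Hxc Hxc' -!gmulA Hcx (tailE Hcx) -!gmulA gmulA.
  exact: gmul_eqr.
have c1 : c <> gone G by move=> e; apply: hx; rewrite Hxc e gmul1.
have Hyd : gstar y = d ** y by rewrite -Hd /cst gmulgVK.
have Hyd' : gstar y = y ** d by rewrite -Hd /cst gmulA -hyy gmulgK.
have Hdy : y ** d = d ** y by rewrite -Hyd'.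
have d2 : d ** d = gone G.
  move: hyy2; rewrite {1}Hyd Hyd' -!gmulA Hdy (tailE Hdy) -!gmulA gmulA.
  exact: gmul_eqr.
have d1 : d <> gone G by move=> e; apply: hy; rewrite Hyd e gmul1.
have [c' Hc'] : exists c', c ** y = y ** c'.
  by exists (ginv y ** c ** y); rewrite -!gmulA gmulVKg.
have [d' Hd'] : exists d', d ** x = x ** d'.
  by exists (ginv x ** d ** x); rewrite -!gmulA gmulVKg.
have c'2 : c' ** c' = gone G.
  apply: (@gmul_eql _ y); rewrite gmulA -Hc' -gmulA -Hc' gmulA c2 gmul1 //.
have d'2 : d' ** d' = gone G.
  apply: (@gmul_eql _ x); rewrite gmulA -Hd' -gmulA -Hd' gmulA d2 gmul1 //.
have c'1 : c' <> gone G by move=> e; apply: c1; apply: (@gmul_eqr _ _ y); rewrite Hc' e gmulg1.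
have d'1 : d' <> gone G by move=> e; apply: d1; apply: (@gmul_eqr _ _ x); rewrite Hd' e gmulg1.
have [k Hkd] : exists k, gcomm x y = k by eexists.
rewrite Hkd.
have Hk : x ** y = y ** (x ** k).
  by rewrite -Hkd /gcomm -!gmulA !gmulVKg.
have E1 : x ** y = y ** x ** k by rewrite Hk gmulA.
have E2 : x ** gstar y = y ** x ** (k ** d) by rewrite Hyd' gmulA Hk -!gmulA.
have E3 : gstar x ** y = y ** x ** (k ** c') by rewrite Hxc' -gmulA Hc' gmulA Hk -!gmulA.
have E4 : gstar x ** gstar y = y ** x ** (k ** c' ** d).
  by rewrite Hxc' Hyd' -!gmulA (tailE Hc') -!gmulA (tailE Hk) -!gmulA.
have E6 : y ** gstar x = y ** x ** c by rewrite Hxc' gmulA.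
have E7 : gstar y ** x = y ** x ** d' by rewrite Hyd' -gmulA Hd' gmulA.
have E8 : gstar y ** gstar x = y ** x ** (d' ** c).
  by rewrite Hyd' Hxc' -!gmulA (tailE Hd') -!gmulA.
have PW : forall w : G, ind k w 1 + ind (k ** d) w (sigma y) + ind (k ** c') w (sigma x)
  + ind (k ** c' ** d) w (sigma x * sigma y) + ind (gone G) w 1 + ind c w (sigma x)
  + ind d' w (sigma y) + ind (d' ** c) w (sigma y * sigma x) = 0.
  move=> w; have := pairS hanti hx hy (y ** x ** w).
  by rewrite E1 E2 E3 E4 E6 E7 E8 ind_mull1 !ind_mull.
have CU : cst (x ** y) = y ** x ** (d' ** c) ** ginv k ** ginv (y ** x).
  by rewrite /cst gstarM E8 E1 ginvM !gmulA.
have Ustar : gstar (x ** y) = y ** x ** (d' ** c) by rewrite gstarM E8.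
have Lc'd : c' = d -> c = d.
  by move=> e; apply: (@gmulIg _ y); rewrite Hc' e Hdy.
have Ld'c : d' = c -> c = d.
  by move=> e; apply: (@gmulIg _ x); rewrite Hd' e Hcx.
have ne2a : ~ (2%:R * sigma x = 0).
  by move=> h; apply: two0; apply: (@unit0 _ _ (sigma x)) => //; rewrite -h mulrC.
have nea : sigma x <> 0.
  by move=> h; apply: ne2a; rewrite h mulr0.
have neb : sigma y <> 0.
  by move=> h; apply: two0; apply: (@unit0 _ _ (sigma y)) => //; rewrite h mulr0.
have N1 : forall r : R, 1 + r = 0 -> r = -1.
  by move=> r h; rewrite -(addKr 1 r) h addr0.
have KC : k = c -> cst (x ** y) = d.
  move=> kc; rewrite CU kc ginvM -!gmulA gmulVKg (tailE (esym Hd')) -!gmulA gmulVKg.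
  by rewrite (tailE Hdy) -!gmulA gmulgV gmulg1.
have bad : gstar (x ** y) = x ** y -> sigma x * sigma y = -1 -> k <> gone G -> k <> c -> False.
  move=> hu hs k1 kc.
  have hN : sigma (x ** y) <> 1.
    rewrite hmorph hs => e; apply: two0.
    have -> : (2%:R : R) = 1 - (-1) by ring.
    by rewrite e subrr.
  have h2 : 2%:R * (1 - sigma (x ** y)) = 0.
    by rewrite hmorph hs -four0; ring.
  have := pair2 hanti hx hu hN h2 (x ** (x ** y)).
  have n1 : gstar x ** (x ** y) <> x ** (x ** y) by move/gmulIg.
  have n2 : x ** y ** x <> x ** (x ** y).
    rewrite -gmulA => /gmulgI; rewrite Hk => /gmulgI e.
    by apply: k1; apply: (@gmul_eql _ x); rewrite -e.
  have n3 : x ** y ** gstar x <> x ** (x ** y).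
    rewrite Hxc' -!gmulA => /gmulgI; rewrite Hk => /gmulgI /gmulgI e.
    by apply: kc.
  rewrite !ind_eq !(ind_ne _ n1) !(ind_ne _ n2) !(ind_ne _ n3) !addr0.
  exact: two0.
have starc : gstar c = c.
  rewrite -{1}Hc /cst gstarM gstarK starV Hxc' ginvM gmulgVK.
  by symmetry; apply: ginv_uniq.
have Lcd : c' = c -> c ** d = d ** c.
  move=> e; have h := gstarM c y; rewrite Hc' gstarM e starc Hyd' in h.
  by move: h; rewrite gmulA Hc' e -!gmulA => /gmulgI.
have cd_c' : c = d -> c' = c.
  by move=> e; apply: (@gmulgI _ y); rewrite -Hc' e Hdy.
have cd_d' : c = d -> d' = c.
  by move=> e; apply: (@gmulgI _ x); rewrite -Hd' -e Hcx.
have n1c : gone G <> c by move/esym.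
split.
  move=> k1.
  have cd : c = d.
    apply: NNPP => cnd.
    have := PW (gone G).
    rewrite k1 !gmul1 !ind_eq !(ind_ne _ d1) !(ind_ne _ c'1) !(ind_ne _ c1) !(ind_ne _ d'1).
    have n1 : c' ** d <> gone G by move/(inv2 d2)/Lc'd.
    have n2 : d' ** c <> gone G by move/(inv2 c2)/Ld'c.
    rewrite !(ind_ne _ n1) !(ind_ne _ n2) => h; apply: two0; rewrite -h; ring.
  split => //.
  have c'c := cd_c' cd; have d'c := cd_d' cd.
  have h1 := PW (gone G); have h2 := PW c.
  rewrite k1 -cd c'c d'c !gmul1 c2 !ind_eq !(ind_ne _ c1) in h1.
  rewrite k1 -cd c'c d'c !gmul1 c2 !ind_eq !(ind_ne _ n1c) in h2.
  split; [rewrite -h1 | rewrite -h2]; ring.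
move=> k1.
case: (classic (c = d)) => [cd|cnd].
  have c'c := cd_c' cd; have d'c := cd_d' cd.
  case: (classic (k = c)) => [kc|nkc].
    left; split => //; first by rewrite KC.
    have h1 := PW (gone G).
    rewrite kc -cd c'c d'c c2 !gmul1 !ind_eq !(ind_ne _ c1) in h1.
    by rewrite -h1; ring.
  right; right; right.
  have hu : gstar (x ** y) <> x ** y.
    rewrite Ustar E1 d'c c2 gmulg1 => /esym /gmul_eql; exact: k1.
  have [hu1 [hu2 _]] := sq_facts hanti hunit two0 hu.
  rewrite Ustar d'c c2 gmulg1 E1 in hu1 hu2.
  have [e He] : exists e, y ** x = e by eexists.
  rewrite He in hu1 hu2 CU.
  have ek : e ** k = k ** e by move: hu1; rewrite -[e ** k ** e]gmulA => /gmulgI.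
  have kk : k ** k = gone G.
    apply: (@gmul_eql _ (e ** e)).
    by rewrite {2}hu2 -!gmulA (tailE (esym ek)) -!gmulA.
  have ik : ginv k = k by symmetry; apply: ginv_uniq.
  have cu : cst (x ** y) = k by rewrite CU d'c c2 gmulg1 ik ek gmulgK.
  rewrite cu; split => //.
  - have h1 := PW (gone G).
    have n1 : k ** c <> gone G by move/(inv2 c2).
    rewrite -cd c'c d'c -gmulA c2 gmulg1 !ind_eq !(ind_ne _ k1) !(ind_ne _ n1) !(ind_ne _ c1) in h1.
    by apply: N1; rewrite -h1; ring.
  - have h2 := PW c.
    have n1 : k ** c <> c by move/gmul_eqr.
    rewrite -cd c'c d'c -gmulA c2 gmulg1 !ind_eq !(ind_ne _ nkc) !(ind_ne _ n1) !(ind_ne _ n1c) in h2.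
    by rewrite -(subr0 (sigma x)) -h2; ring.
have one0 : (1 : R) <> 0.
  by move=> h; apply: two0; rewrite -(mulr1 2%:R) h mulr0.
have nc'd : c' <> d by move/Lc'd.
have nd'c : d' <> c by move/Ld'c.
have nd'c1 : d' ** c <> gone G by move/(inv2 c2).
have n1d : gone G <> d by move/esym.
have h1 := PW (gone G).
rewrite !(ind_ne _ k1) !(ind_ne _ c1) !(ind_ne _ d'1) !(ind_ne _ nd'c1) !ind_eq in h1.
case: (classic (k = d)) => [kd|nkd].
  have n1 : d ** c' <> gone G by move/(inv2 c'2)/esym.
  have n2 : d ** c' ** d <> gone G by move/(inv2 d2)/gmul_eql.
  rewrite kd d2 !ind_eq !(ind_ne _ n1) !(ind_ne _ n2) in h1.
  have hb : sigma y = -1 by apply: N1; rewrite -h1; ring.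
  have h2 := PW k.
  have n3 : d ** c' <> d by move/gmul_eql.
  have n4 : d ** c' ** d <> d by move/gmul_eqr.
  rewrite kd d2 !ind_eq !(ind_ne _ n1d) !(ind_ne _ n3) !(ind_ne _ n4) !(ind_ne _ cnd) in h2.
  case: (classic (d' = d)) => [e1|ne1].
    have c'c : c' = c.
      apply: NNPP => ne.
      have h3 := PW (k ** c'); rewrite kd e1 in h3.
      have n6 : d <> d ** c' by move/esym/gmul_eql.
      have n7 : d ** c' ** d <> d ** c' by move/gmul_eql.
      have n8 : gone G <> d ** c' by move/esym.
      have ndc' : d <> c' by move/esym.
      have ncc' : c <> c' by move/esym.
      rewrite !ind_mull !ind_eq !(ind_ne _ n6) !(ind_ne _ n7) !(ind_ne _ n8) !(ind_ne _ ndc') !(ind_ne _ ncc') in h3.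
      case: (classic (c = d ** c')) => [e3|ne3].
        rewrite e3 !ind_eq in h3; apply: ne2a; rewrite -h3; ring.
      rewrite !(ind_ne _ ne3) in h3; apply: nea; rewrite -h3; ring.
    right; right; left.
    have Hyc : y ** c = c ** y by rewrite Hc' c'c.
    have cu : cst (x ** y) = c.
      rewrite CU kd e1 -(Lcd c'c) gmulA gmulgK ginvM -!gmulA (tailE Hcx) -!gmulA gmulVKg.
      by rewrite (tailE Hyc) gmulgK.
    split => //; first by move/esym.
  rewrite !(ind_ne _ ne1) in h2.
  case: (classic (d' ** c = d)) => [e2|ne2'].
    rewrite e2 !ind_eq in h2.
    exfalso; apply: (bad _ _ k1).
    - by rewrite Ustar e2 -kd -E1.
    - by rewrite mulrC; apply: N1; rewrite -h2; ring.
    - by rewrite kd => /esym.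
  rewrite !(ind_ne _ ne2') in h2; exfalso; apply: one0; rewrite -h2; ring.
have n1 : k ** d <> gone G by move/(inv2 d2).
rewrite !(ind_ne _ n1) in h1.
case: (classic (k = c')) => [kc'|nkc'].
  rewrite kc' c'2 !gmul1 !ind_eq !(ind_ne _ d1) in h1.
  have ha : sigma x = -1 by apply: N1; rewrite -h1; ring.
  case: (classic (c = c')) => [e|ne].
    right; left.
    have kc : k = c by rewrite kc' -e.
    by split => //; rewrite KC.
  have h2 := PW k.
  have m1 : c' ** d <> c' by move/gmul_eql.
  have m2 : gone G <> c' by move/esym.
  have m3 : d <> c' by move/esym.
  rewrite kc' c'2 !gmul1 !ind_eq !(ind_ne _ m1) !(ind_ne _ m2) !(ind_ne _ m3) !(ind_ne _ ne) in h2.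
  case: (classic (c' = d')) => [e2|ne2'].
    have m4 : c' ** c <> c' by move/gmul_eql.
    rewrite -e2 !ind_eq !(ind_ne _ m4) in h2.
    have hb : sigma y = -1 by apply: N1; rewrite -h2; ring.
    have h3 := PW (k ** d).
    have m5 : c' <> c' ** d by move/esym/gmul_eql.
    have m6 : gone G <> c' ** d by move/esym/(inv2 d2).
    have m7 : d <> c' ** d by move/esym/gmul_eqr.
    rewrite kc' -e2 c'2 !gmul1 !ind_mull !ind_eq !(ind_ne _ m5) !(ind_ne _ m6) !(ind_ne _ m7) !(ind_ne _ cnd) in h3.
    case: (classic (c = c' ** d)) => [e3|ne3].
      rewrite e3 !ind_eq ha hb in h3; exfalso; apply: two0; rewrite -oppr0 -h3; ring.
    rewrite !(ind_ne _ ne3) in h3; exfalso; apply: neb; rewrite -h3; ring.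
  have ne2'' : d' <> c' by move/esym.
  rewrite !(ind_ne _ ne2'') in h2.
  case: (classic (d' ** c = c')) => [e3|ne3].
    rewrite e3 !ind_eq in h2.
    exfalso; apply: (bad _ _ k1).
    - by rewrite Ustar e3 -kc' -E1.
    - by rewrite mulrC; apply: N1; rewrite -h2; ring.
    - by rewrite kc' => /esym.
  rewrite !(ind_ne _ ne3) in h2; exfalso; apply: one0; rewrite -h2; ring.
have n2 : k ** c' <> gone G by move/(inv2 c'2).
rewrite !(ind_ne _ n2) in h1.
case: (classic (k ** c' ** d = gone G)) => [e|ne]; last first.
  rewrite !(ind_ne _ ne) in h1; exfalso; apply: one0; rewrite -h1; ring.
rewrite e !ind_eq in h1.
have hab : sigma x * sigma y = -1 by apply: N1; rewrite -h1; ring.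
have h2 := PW k.
have m1 : k ** d <> k by move/gmul_eql.
have m2 : k ** c' <> k by move/gmul_eql.
have m3 : gone G <> k by move/esym.
rewrite e !ind_eq !(ind_ne _ m1) !(ind_ne _ m2) !(ind_ne _ m3) in h2.
case: (classic (c = k)) => [e1|ne1].
  have m5 : d' ** c <> c by move/gmul_eqr.
  rewrite -e1 !ind_eq !(ind_ne _ nd'c) !(ind_ne _ m5) in h2.
  right; left.
  split => //; first by rewrite KC.
  by apply: N1; rewrite -h2; ring.
rewrite !(ind_ne _ ne1) in h2.
case: (classic (d' = k)) => [e2|ne2].
  have m6 : k ** c <> k by move/gmul_eql.
  rewrite e2 !ind_eq !(ind_ne _ m6) in h2.
  have hb : sigma y = -1 by apply: N1; rewrite -h2; ring.
  have ha : sigma x = 1.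
    rewrite hb in hab; transitivity (- (sigma x * -1)); first ring.
    by rewrite hab opprK.
  have h3 := PW (k ** d).
  have p1 : k <> k ** d by move/esym/gmul_eql.
  have p2 : gone G <> k ** d by move/esym/(inv2 d2).
  rewrite e e2 !ind_mull !ind_eq !(ind_ne _ p1) !(ind_ne _ nc'd) !(ind_ne _ p2) !(ind_ne _ cnd) in h3.
  have ckd : c = k ** d.
    apply: NNPP => ne'; rewrite !(ind_ne _ ne') in h3; apply: neb; rewrite -h3; ring.
  have h4 := PW (k ** c').
  have q1 : k <> k ** c' by move/esym/gmul_eql.
  have q2 : gone G <> k ** c' by move/esym/(inv2 c'2).
  have ndc' : d <> c' by move/esym.
  rewrite e e2 ckd !ind_mull !ind_eq !(ind_ne _ q1) !(ind_ne _ q2) !(ind_ne _ ndc') in h4.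
  have c'c : c' = c.
    rewrite ckd; apply: NNPP => ne'.
    have ne'' : k ** d <> c' by move/esym.
    rewrite !(ind_ne _ ne'') in h4; apply: nea; rewrite -h4; ring.
  have kcd : k = c ** d by rewrite ckd -gmulA d2 gmulg1.
  have cdc : c ** d = d ** c := Lcd c'c.
  have Hyc : y ** c = c ** y by rewrite Hc' c'c.
  have Hky : k ** y = y ** k.
    by rewrite kcd -gmulA -Hdy gmulA -Hyc -gmulA.
  have kc_d : k ** c = d by rewrite kcd cdc -gmulA c2 gmulg1.
  have hu : gstar (x ** y) <> x ** y.
    rewrite Ustar E1 e2 => /gmulgI /gmul_eql; exact: c1.
  have h5 := pairS hanti hy hu (y ** (x ** y)).
  have r1 : y ** gstar (x ** y) <> y ** (x ** y) by move/gmulgI.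
  have r2 : gstar y ** (x ** y) <> y ** (x ** y) by move/gmulIg.
  have r3 : gstar y ** gstar (x ** y) <> y ** (x ** y).
    rewrite Ustar e2 kc_d Hyd' E1 -!gmulA => /gmulgI.
    rewrite (tailE (esym Hdy)) -!gmulA => /gmulgI.
    rewrite (tailE Hd') -!gmulA => /gmulgI.
    rewrite e2 => /gmul_eql; exact: d1.
  have r4 : x ** y ** y <> y ** (x ** y).
    rewrite gmulA => /gmulIg; rewrite E1 => /gmul_eql; exact: k1.
  have r5 : x ** y ** gstar y <> y ** (x ** y).
    rewrite Hyd' E1 -!gmulA => /gmulgI.
    rewrite (tailE Hky) -!gmulA -ckd (tailE Hk) -!gmulA => /gmulgI /gmulgI /gmul_eql.
    exact: c1.
  have r6 : gstar (x ** y) ** y <> y ** (x ** y).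
    rewrite Ustar e2 -!gmulA => /gmulgI /gmulgI.
    rewrite gmulA => /gmul_eqr /(inv2 c2) /esym; exact: ne1.
  rewrite !ind_eq !(ind_ne _ r1) !(ind_ne _ r2) !(ind_ne _ r3) !(ind_ne _ r4) !(ind_ne _ r5) !(ind_ne _ r6) hmorph ha hb in h5.
  case: (classic (gstar (x ** y) ** gstar y = y ** (x ** y))) => [e5|ne5].
    rewrite e5 !ind_eq in h5; exfalso; apply: two0; rewrite -h5; ring.
  rewrite !(ind_ne _ ne5) in h5; exfalso; apply: one0; rewrite -h5; ring.
rewrite !(ind_ne _ ne2) in h2.
case: (classic (d' ** c = k)) => [e3|ne3].
  rewrite e3 !ind_eq in h2.
  exfalso; apply: (bad _ _ k1) => //.
  - by rewrite Ustar e3 -E1.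
  - by move/esym.
rewrite !(ind_ne _ ne3) in h2; exfalso; apply: one0; rewrite -h2; ring.
Qed.
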